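(* Let $Y\in[M]=\{1,\dots,M\}$, $R\in\{0,1\}$, and $F$ taking values in a finite set $\mathcal F$, with $\mathbb{P}(F=f,R=1)>0$ for all $f\in\mathcal F$. Define $B\in\mathbb{R}^{|\mathcal F|\times M}$ by $B_{fy}=\mathbb{P}(Y=y\mid F=f,R=1)$ and $H\in\mathbb{R}^{|\mathcal F|\times M}$ by $H_{fy}=\mathbb{P}(F=f,Y=y)$. Say that completeness holds if for every function $h:[M]\to\mathbb{R}$, $\mathbb{E}[h(Y)\mid F=f,R=1]=0$ for all $f\in\mathcal F$ implies $h(y)=0$ for all $y\in[M]$. Then: (i) completeness holds if and only if $\operatorname{rank}(B)=M$. (ii) Suppose in addition that $F$ is conditionally independent of $R$ given $Y$, that $\pi(y):=\mathbb{P}(R=1\mid Y=y)\in[\underline\pi,\overline\pi]$ for all $y$, and that $\mathbb{P}(F=f,R=1)\in[\underline p_F,\overline p_F]$ for all $f$, where $\underline\pi>0$ and $\underline p_F>0$. Then completeness holds if and only if $\operatorname{rank}(H)=M$, and in that case \[\kappa(B)\le \frac{\overline p_F}{\underline p_F}\cdot\frac{\overline\pi}{\underline\pi}\cdot\kappa(H),\] where for a matrix $G$ with full column rank, $\kappa(G)=\sigma_{\max}(G)/\sigma_{\min}(G)$ is the ratio of its largest to its smallest singular value.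
   Context: Here $F$ plays the role of an always-observed auxiliary prediction of the outcome $Y$ (a shadow variable), and the covariate $X$ is suppressed (equivalently, everything is conditional on a fixed value of $X$). *)

(* Defs.v *)
From HB Require Import structures.
From mathcomp Require Import all_boot all_order all_algebra.
From mathcomp Require Import classical_sets reals.
Set Implicit Arguments. Unset Strict Implicit. Unset Printing Implicit Defensive.
Import Order.TTheory GRing.Theory Num.Theory.
Local Open Scope ring_scope.

Section Defs.
Variables (R : realType) (n M : nat).
(* F takes values in 'I_n (the finite set \mathcal F, |F| = n), Y in 'I_M
   (i.e. [M]), R in bool (true = 1).  p f y r = P(F=f, Y=y, R=r). *)
Variable p : 'I_n -> 'I_M -> bool -> R.

Definition is_pmf := (forall f y r, 0 <= p f y r) /\
  \sum_(f < n) \sum_(y < M) \sum_(r : bool) p f y r = 1.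

Definition pFR1 (f : 'I_n) : R := \sum_(y < M) p f y true.
Definition pY (y : 'I_M) : R := \sum_(f < n) \sum_(r : bool) p f y r.
Definition pYR (y : 'I_M) (r : bool) : R := \sum_(f < n) p f y r.
Definition pFY (f : 'I_n) (y : 'I_M) : R := \sum_(r : bool) p f y r.

Definition piR (y : 'I_M) : R := pYR y true / pY y.

Definition Bmat : 'M[R]_(n, M) := \matrix_(f < n, y < M) (p f y true / pFR1 f).
Definition Hmat : 'M[R]_(n, M) := \matrix_(f < n, y < M) pFY f y.

Definition condE (h : 'I_M -> R) (f : 'I_n) : R :=
  \sum_(y < M) h y * (p f y true / pFR1 f).

Definition completeness : Prop :=
  forall h : 'I_M -> R, (forall f, condE h f = 0) -> forall y, h y = 0.

Definition cond_indep_F_R_given_Y : Prop :=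
  forall f y r, p f y r * pY y = pFY f y * pYR y r.
End Defs.

Definition sigma_max (R : realType) m k (G : 'M[R]_(m, k)) : R :=
  Num.sqrt (sup [set a : R | eigenvalue (G^T *m G) a]).
Definition sigma_min (R : realType) m k (G : 'M[R]_(m, k)) : R :=
  Num.sqrt (inf [set a : R | eigenvalue (G^T *m G) a]).
Definition cond_number (R : realType) m k (G : 'M[R]_(m, k)) : R :=
  sigma_max G / sigma_min G.

(* Main.v *)
Require Import Defs.
From HB Require Import structures.
From mathcomp Require Import all_boot all_order all_algebra.
From mathcomp Require Import classical_sets reals.
From mathcomp Require Import ring lra.
Import Order.TTheory GRing.Theory Num.Theory.
Set Implicit Arguments. Unset Strict Implicit. Unset Printing Implicit Defensive.
Local Open Scope classical_set_scope.
Local Open Scope ring_scope.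

Section LA.
Variable R : realType.

Definition dotv k (x y : 'rV[R]_k) : R := (x *m y^T) 0 0.
Definition nrm k (x : 'rV[R]_k) : R := dotv x x.
Definition form k (T : 'M[R]_k) (w : 'rV[R]_k) : R := (w *m T *m w^T) 0 0.

Lemma dotvE k (x y : 'rV[R]_k) : dotv x y = \sum_i x 0 i * y 0 i.
Proof. by rewrite /dotv mxE; apply: eq_bigr => i _; rewrite mxE. Qed.

Lemma nrmE k (x : 'rV[R]_k) : nrm x = \sum_i x 0 i ^+ 2.
Proof. by rewrite /nrm dotvE; apply: eq_bigr => i _; rewrite expr2. Qed.

Lemma nrm_ge0 k (x : 'rV[R]_k) : 0 <= nrm x.
Proof. by rewrite nrmE sumr_ge0 // => i _; rewrite sqr_ge0. Qed.

Lemma nrm_gt0 k (x : 'rV[R]_k) : x != 0 -> 0 < nrm x.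
Proof.
move=> nz; rewrite lt_def nrm_ge0 andbT; apply: contra nz.
rewrite nrmE psumr_eq0 => [/allP H|i _]; last by rewrite sqr_ge0.
apply/eqP/rowP => i; rewrite mxE; apply/eqP; rewrite -sqrf_eq0.
by apply: (implyP (H i _)) => //; rewrite mem_index_enum.
Qed.

Lemma dotv_le k (x y : 'rV[R]_k) : dotv x y <= (nrm x + nrm y) / 2.
Proof.
rewrite dotvE !nrmE -big_split /= mulr_suml; apply: ler_sum => i _.
set a := x 0 i; set b := y 0 i.
have : 0 <= (a - b) ^+ 2 by rewrite sqr_ge0.
nra.
Qed.

Lemma form_expand k (T : 'M[R]_k) (w u : 'rV[R]_k) (t : R) : T^T = T ->
  form T (w - t *: u) = form T w - 2 * t * (w *m T *m u^T) 0 0 + t ^+ 2 * form T u.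
Proof.
move=> sT; rewrite /form.
have -> : (w - t *: u)^T = w^T - t *: u^T by rewrite linearB linearZ.
have E : u *m T *m w^T = w *m T *m u^T.
  apply/matrixP => i j; rewrite !ord1.
  have -> : w *m T *m u^T = (u *m T *m w^T)^T by rewrite !trmx_mul trmxK sT mulmxA.
  by rewrite [RHS]mxE.
rewrite !mulmxBl !mulmxBr -!scalemxAl -!scalemxAr E scalerA !mxE.
rewrite -expr2; ring.
Qed.

Lemma sq_sum_le k (x : 'I_k -> R) :
  (\sum_i x i) ^+ 2 <= k%:R * \sum_i x i ^+ 2.
Proof.
have E : k%:R * \sum_i x i ^+ 2 = \sum_i \sum_j (x i ^+ 2 + x j ^+ 2) / 2.
  rewrite [RHS](eq_bigr (fun i => (x i ^+ 2 *+ k + \sum_j x j ^+ 2) / 2)); last first.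
    by move=> i _; rewrite -mulr_suml big_split /= sumr_const card_ord.
  rewrite -mulr_suml big_split /= sumr_const card_ord sumrMnl.
  rewrite -[(\sum_i _) *+ k]mulr_natl.
  by rewrite -mulr2n -[_ *+ 2]mulr_natr mulfK // pnatr_eq0.
rewrite E expr2 mulr_suml; apply: ler_sum => i _; rewrite mulr_sumr.
apply: ler_sum => j _.
have : 0 <= (x i - x j) ^+ 2 by rewrite sqr_ge0.
rewrite sqrrB. lra.
Qed.
Lemma entry_le k l (A : 'M[R]_(k, l)) i j :
  A i j ^+ 2 <= \sum_i' \sum_j' A i' j' ^+ 2.
Proof.
rewrite (bigD1 i) //= (bigD1 j) //= -addrA lerDl.
by rewrite addr_ge0 // sumr_ge0 // => *; [rewrite sqr_ge0 | rewrite sumr_ge0 // => *; rewrite sqr_ge0].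
Qed.

Lemma op_bound k l (A : 'M[R]_(k, l)) :
  exists2 K, 0 < K & forall u : 'rV_k, nrm (u *m A) <= K * nrm u.
Proof.
set c := \sum_i' \sum_j' A i' j' ^+ 2.
have c0 : 0 <= c by rewrite sumr_ge0 // => *; rewrite sumr_ge0 // => *; rewrite sqr_ge0.
exists (l%:R * k%:R * c + 1).
  by rewrite ltr_pwDr // mulr_ge0 // mulr_ge0.
move=> u; rewrite mulrDl mul1r.
apply: (@le_trans _ _ (l%:R * k%:R * c * nrm u)); last by rewrite lerDl nrm_ge0.
have -> : l%:R * k%:R * c * nrm u = \sum_(j < l) (k%:R * \sum_i (u 0 i ^+ 2 * c)).
  by rewrite sumr_const card_ord -mulr_suml -nrmE -[_ *+ l]mulr_natl; ring.
rewrite nrmE; apply: ler_sum => j _; rewrite mxE.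
apply: le_trans (sq_sum_le _) _; rewrite ler_wpM2l //.
apply: ler_sum => i _; rewrite exprMn ler_wpM2l ?sqr_ge0 //.
exact: entry_le.
Qed.

Lemma core k (T : 'M[R]_k) : T^T = T -> (forall w, 0 <= form T w) ->
  (forall e, 0 < e -> exists2 w : 'rV_k, w != 0 & form T w < e * nrm w) ->
  exists2 v : 'rV_k, v != 0 & v *m T = 0.
Proof.
move=> sT pos small.
case: (boolP (\det T == 0)) => [/det0P [v nz vT] | ndet]; first by exists v.
exfalso.
have Tu : T \in unitmx by rewrite unitmxE unitfE.
have [K1 K1p HK1] := op_bound T.
have [K2 K2p HK2] := op_bound (invmx T).
pose K3 := (K1 + 1) / 2.
have K3p : 0 < K3 by rewrite /K3 divr_gt0 // ltr_wpDl // ltW.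
have HK3 : forall u, form T u <= K3 * nrm u.
  move=> u; apply: le_trans (dotv_le (u *m T) u) _.
  have := HK1 u; rewrite /K3; lra.
have key : forall w, nrm w <= K2 * K3 * form T w.
  move=> w.
  have E1 : nrm w <= K2 * nrm (w *m T).
    by have := HK2 (w *m T); rewrite -mulmxA mulmxV // mulmx1.
  have E2 : nrm (w *m T) <= K3 * form T w.
    have := pos (w - K3^-1 *: (w *m T)); rewrite form_expand //.
    have -> : (w *m T *m (w *m T)^T) 0 0 = nrm (w *m T) by [].
    have := HK3 (w *m T).
    set N := nrm (w *m T); set f := form T w; set g := form T (w *m T).
    move=> hg h.
    have hi : K3^-1 ^+ 2 * g <= K3^-1 * N.
      have h0 : g / K3 <= N by rewrite ler_pdivrMr // mulrC.
      rewrite expr2 -mulrA; apply: ler_wpM2l; first by rewrite invr_ge0 ltW.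
      by rewrite mulrC.
    have h2 : 0 <= f - K3^-1 * N by lra.
    have : 0 <= K3 * (f - K3^-1 * N) by rewrite mulr_ge0 // ltW.
    rewrite mulrBr mulrA divff ?gt_eqF // mul1r; lra.
  apply: le_trans E1 _; rewrite -mulrA ler_wpM2l // ltW //.
have KK : 0 < K2 * K3 by apply: mulr_gt0.
have ep : 0 < (K2 * K3)^-1 by rewrite invr_gt0.
have [w nz hw] := small _ ep.
have h3 := key w.
have : K2 * K3 * form T w < K2 * K3 * ((K2 * K3)^-1 * nrm w).
  by rewrite ltr_pM2l.
rewrite mulVKf ?gt_eqF // => h1.
by have := le_lt_trans h3 h1; rewrite ltxx.
Qed.

Definition qf m k (G : 'M[R]_(m, k)) (v : 'rV[R]_k) : R := nrm (v *m G^T).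

Lemma formS m k (G : 'M[R]_(m, k)) v : form (G^T *m G) v = qf G v.
Proof. by rewrite /form /qf /nrm /dotv trmx_mul trmxK !mulmxA. Qed.

Lemma form_scalar k (a : R) (v : 'rV[R]_k) : form a%:M v = a * nrm v.
Proof. by rewrite /form mul_mx_scalar -scalemxAl mxE. Qed.

Lemma formB k (A B : 'M[R]_k) v : form (A - B) v = form A v - form B v.
Proof. by rewrite /form mulmxBr mulmxBl !mxE. Qed.

Lemma nrm0 k : nrm (0 : 'rV[R]_k) = 0.
Proof. by rewrite /nrm /dotv mul0mx mxE. Qed.

Lemma qf0 m k (G : 'M[R]_(m, k)) : qf G 0 = 0.
Proof. by rewrite /qf mul0mx nrm0. Qed.

Lemma symS m k (G : 'M[R]_(m, k)) (a : R) :
  (a%:M - G^T *m G)^T = a%:M - G^T *m G.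
Proof. by rewrite linearB /= tr_scalar_mx trmx_mul trmxK. Qed.

Lemma symS' m k (G : 'M[R]_(m, k)) (a : R) :
  (G^T *m G - a%:M)^T = G^T *m G - a%:M.
Proof. by rewrite linearB /= tr_scalar_mx trmx_mul trmxK. Qed.

Lemma const1_neq0 k : (0 < k)%N -> (const_mx 1 : 'rV[R]_k) != 0.
Proof.
move=> k0; apply/eqP => /rowP /(_ (Ordinal k0)); rewrite !mxE => /eqP.
by rewrite oner_eq0.
Qed.

Lemma eig_q m k (G : 'M[R]_(m, k)) a : eigenvalue (G^T *m G) a ->
  exists2 v : 'rV_k, v != 0 & qf G v = a * nrm v.
Proof.
move=> /eigenvalueP [v vS nz]; exists v => //.
by rewrite -formS /form vS -scalemxAl mxE.
Qed.

Lemma ext_max m k (G : 'M[R]_(m, k)) : (0 < k)%N ->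
  exists l, eigenvalue (G^T *m G) l /\ forall v, qf G v <= l * nrm v.
Proof.
move=> k0.
pose E := [set r : R | exists2 w : 'rV_k, w != 0 & r = qf G w / nrm w].
have [K Kp HK] := op_bound G^T.
have hs : has_sup E.
  split; first by exists (qf G (const_mx 1 : 'rV_k) / nrm (const_mx 1 : 'rV_k)); exists (const_mx 1); rewrite ?const1_neq0.
  exists K => r [w nz ->]; rewrite ler_pdivrMr ?nrm_gt0 //; exact: HK.
have bnd : forall v, qf G v <= sup E * nrm v.
  move=> v; have [->|nz] := eqVneq v 0; first by rewrite qf0 nrm0 mulr0.
  rewrite -ler_pdivrMr ?nrm_gt0 //; apply: sup_upper_bound => //.
  by exists v.
have [v nz vT] : exists2 v : 'rV_k, v != 0 & v *m ((sup E)%:M - G^T *m G) = 0.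
  apply: core; first exact: symS.
  by move=> w; rewrite formB form_scalar formS subr_ge0.
  move=> e e0; have [r [w nz ->] hr] := sup_adherent e0 hs.
  exists w => //; rewrite formB form_scalar formS.
  move: hr; rewrite ltr_pdivlMr ?nrm_gt0 // mulrBl; lra.
exists (sup E); split => //; apply/eigenvalueP; exists v => //.
by move: vT; rewrite mulmxBr mul_mx_scalar => /eqP; rewrite subr_eq0 => /eqP.
Qed.

Lemma ext_min m k (G : 'M[R]_(m, k)) : (0 < k)%N ->
  exists l, eigenvalue (G^T *m G) l /\ forall v, l * nrm v <= qf G v.
Proof.
move=> k0.
pose E := [set r : R | exists2 w : 'rV_k, w != 0 & r = qf G w / nrm w].
have hs : has_inf E.
  split; first by exists (qf G (const_mx 1 : 'rV_k) / nrm (const_mx 1 : 'rV_k)); exists (const_mx 1); rewrite ?const1_neq0.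
  exists 0 => r [w nz ->]; rewrite divr_ge0 // ?nrm_ge0 //.
have bnd : forall v, inf E * nrm v <= qf G v.
  move=> v; have [->|nz] := eqVneq v 0; first by rewrite qf0 nrm0 mulr0.
  rewrite -ler_pdivlMr ?nrm_gt0 //; apply: ge_inf; first by case: hs.
  by exists v.
have [v nz vT] : exists2 v : 'rV_k, v != 0 & v *m (G^T *m G - (inf E)%:M) = 0.
  apply: core; first exact: symS'.
  by move=> w; rewrite formB form_scalar formS subr_ge0.
  move=> e e0; have [r [w nz ->] hr] := inf_adherent e0 hs.
  exists w => //; rewrite formB form_scalar formS.
  move: hr; rewrite ltr_pdivrMr ?nrm_gt0 // mulrDl; lra.
exists (inf E); split => //; apply/eigenvalueP; exists v => //.
by move: vT; rewrite mulmxBr mul_mx_scalar => /eqP; rewrite subr_eq0 => /eqP.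
Qed.

Lemma sup_eig m k (G : 'M[R]_(m, k)) l : eigenvalue (G^T *m G) l ->
  (forall v, qf G v <= l * nrm v) -> sup [set a : R | eigenvalue (G^T *m G) a] = l.
Proof.
move=> el bnd; have ub : ubound [set a : R | eigenvalue (G^T *m G) a] l.
  move=> a /= /eig_q [v nz hv].
  by rewrite -(ler_pM2r (nrm_gt0 nz)) -hv bnd.
apply/eqP; rewrite eq_le; apply/andP; split.
  by apply: ge_sup => //; exists l.
by apply: sup_upper_bound => //; split; [exists l | exists l].
Qed.

Lemma inf_eig m k (G : 'M[R]_(m, k)) l : eigenvalue (G^T *m G) l ->
  (forall v, l * nrm v <= qf G v) -> inf [set a : R | eigenvalue (G^T *m G) a] = l.
Proof.
move=> el bnd; have lb : lbound [set a : R | eigenvalue (G^T *m G) a] l.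
  move=> a /= /eig_q [v nz hv].
  by rewrite -(ler_pM2r (nrm_gt0 nz)) -hv bnd.
apply/eqP; rewrite eq_le; apply/andP; split.
  by apply: ge_inf => //; exists l.
by apply: lb_le_inf => //; exists l.
Qed.

Definition injG n k (G : 'M[R]_(n, k)) :=
  forall h : 'I_k -> R, (forall f, \sum_y G f y * h y = 0) -> forall y, h y = 0.

Lemma inj_rank n k (G : 'M[R]_(n, k)) : injG G <-> \rank G = k.
Proof.
rewrite -mxrank_tr; split.
  move=> inj; apply/eqP; rewrite -/(row_free G^T) -kermx_eq0.
  apply/negPn/negP => /rowV0Pn [v /sub_kermxP vK nz].
  case/negP: nz; apply/eqP/rowP => y; rewrite mxE; apply: inj => f.
  have /rowP /(_ f) := vK; rewrite !mxE => h0; rewrite -[RHS]h0.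
  by apply: eq_bigr => i _; rewrite mxE mulrC.
move=> /eqP rf h hs y.
have : (\row_y h y) *m G^T == 0.
  apply/eqP/rowP => f; rewrite !mxE -[RHS](hs f); apply: eq_bigr => i _.
  by rewrite !mxE mulrC.
rewrite mulmx_free_eq0 // => /eqP /rowP /(_ y); by rewrite !mxE.
Qed.

Lemma inj_scale n k (G G' : 'M[R]_(n, k)) (c : 'I_k -> R) (d : 'I_n -> R) :
  injG G -> (forall f y, G' f y = G f y * c y * d f) ->
  (forall y, c y != 0) -> (forall f, d f != 0) -> injG G'.
Proof.
move=> inj E cn dn h hs y.
have : c y * h y = 0.
  apply: (inj (fun y => c y * h y)) => f.
  have := hs f.
  have -> : \sum_y G' f y * h y = d f * \sum_y G f y * (c y * h y).
    rewrite mulr_sumr; apply: eq_bigr => i _; rewrite E; ring.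
  by move/eqP; rewrite mulf_eq0 (negbTE (dn f)) => /eqP.
by move/eqP; rewrite mulf_eq0 (negbTE (cn y)) => /eqP.
Qed.

Lemma nrm_eq0 k (x : 'rV[R]_k) : nrm x = 0 -> x = 0.
Proof.
move=> h; apply/eqP; apply: contraT => nz.
by have := nrm_gt0 nz; rewrite h ltxx.
Qed.

Lemma qf_rel n k (G G' : 'M[R]_(n, k)) (c : 'I_k -> R) (d : 'I_n -> R) v :
  (forall f y, G' f y = G f y * c y / d f) ->
  qf G' v = \sum_f (((\row_y (v 0 y * c y)) *m G^T) 0 f) ^+ 2 / d f ^+ 2.
Proof.
move=> E; rewrite /qf nrmE; apply: eq_bigr => f _.
rewrite -expr_div_n; congr (_ ^+ 2); rewrite !mxE mulr_suml.
by apply: eq_bigr => i _; rewrite !mxE E; ring.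
Qed.

Lemma sq_le (x y : R) : 0 <= x -> x <= y -> x ^+ 2 <= y ^+ 2.
Proof. by move=> x0 xy; rewrite ler_sqr ?nnegrE // (le_trans x0 xy). Qed.

Lemma inv_sq_le (l d : R) : 0 < l -> l <= d -> (d ^+ 2)^-1 <= (l ^+ 2)^-1.
Proof.
move=> l0 ld; have d0 : 0 < d := lt_le_trans l0 ld.
by rewrite lef_pV2 ?posrE ?exprn_gt0 // sq_le // ltW.
Qed.

End LA.

Theorem proposition3 (R : realType) (n M : nat)
    (p : 'I_n -> 'I_M -> bool -> R) :
  is_pmf p ->
  (forall f, 0 < pFR1 p f) ->
  (completeness p <-> \rank (Bmat p) = M) /\
  (forall pi_lo pi_hi pF_lo pF_hi : R,
     cond_indep_F_R_given_Y p ->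
     (forall y, pi_lo <= piR p y <= pi_hi) ->
     (forall f, pF_lo <= pFR1 p f <= pF_hi) ->
     0 < pi_lo -> 0 < pF_lo ->
     (completeness p <-> \rank (Hmat p) = M) /\
     (completeness p ->
        cond_number (Bmat p) <=
          (pF_hi / pF_lo) * (pi_hi / pi_lo) * cond_number (Hmat p))).
Proof.
move=> [p0 psum] pF0.
have compB : completeness p <-> injG (Bmat p).
  rewrite /completeness /injG; split=> H h hs; apply: H => f;
  rewrite -[RHS](hs f) /condE; apply: eq_bigr => y _; by rewrite mxE mulrC.
split; first by rewrite compB; exact: inj_rank.
move=> pil pih pFl pFh ci hpi hpF pil0 pFl0.
have pY0 : forall y, 0 < pY p y.
  move=> y; have /andP [h _] := hpi y.
  rewrite lt_def; apply/andP; split.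
    apply/eqP => e; move: h; rewrite /piR e invr0 mulr0 => h.
    by have := lt_le_trans pil0 h; rewrite ltxx.
  by rewrite /pY sumr_ge0 // => f _; rewrite sumr_ge0.
have pi0 : forall y, 0 < piR p y.
  by move=> y; have /andP [h _] := hpi y; exact: lt_le_trans pil0 h.
have BH : forall f y, Bmat p f y = Hmat p f y * piR p y / pFR1 p f.
  move=> f y; rewrite !mxE; congr (_ / _).
  have nz : pY p y != 0 by rewrite gt_eqF.
  by rewrite -[LHS](mulfK nz) ci /piR mulrA.
have compH : completeness p <-> injG (Hmat p).
  rewrite compB; split => hi.
  - apply: (@inj_scale _ _ _ (Bmat p) (Hmat p) (fun y => (piR p y)^-1) (fun f => pFR1 p f)) => //.
    + move=> f y; rewrite BH; field.
      by apply/andP; split; rewrite gt_eqF.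
    + by move=> y; rewrite invr_eq0 gt_eqF.
    + by move=> f; rewrite gt_eqF.
  - apply: (@inj_scale _ _ _ (Hmat p) (Bmat p) (fun y => piR p y) (fun f => (pFR1 p f)^-1)) => //.
    + by move=> y; rewrite gt_eqF.
    + by move=> f; rewrite invr_eq0 gt_eqF.
split; first by rewrite compH; exact: inj_rank.
move=> /[dup] /compB injB /compH injH.
have M0 : (0 < M)%N.
  rewrite lt0n; apply/negP => /eqP M0.
  have : \sum_(f < n) \sum_(y < M) \sum_r p f y r = 0.
    apply: big1 => f _; apply: big1 => -[y hy]; exfalso; by move: hy; rewrite M0.
  by rewrite psum => /eqP; rewrite oner_eq0.
have n0 : (0 < n)%N.
  rewrite lt0n; apply/negP => /eqP n0.
  have : \sum_(f < n) \sum_(y < M) \sum_r p f y r = 0.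
    apply: big1 => -[f hf]; exfalso; by move: hf; rewrite n0.
  by rewrite psum => /eqP; rewrite oner_eq0.
have hFh : 0 < pFh.
  have /andP [h1 h2] := hpF (Ordinal n0); exact: lt_le_trans (pF0 _) h2.
have [lB [eB bB]] := ext_max (Bmat p) M0.
have [mB [emB bmB]] := ext_min (Bmat p) M0.
have [lH [eH bH]] := ext_max (Hmat p) M0.
have [mH [emH bmH]] := ext_min (Hmat p) M0.
rewrite /cond_number /sigma_max /sigma_min (sup_eig eB bB) (inf_eig emB bmB).
rewrite (sup_eig eH bH) (inf_eig emH bmH).
pose w (v : 'rV[R]_M) := \row_y (v 0 y * piR p y).
have qB : forall v, qf (Bmat p) v =
    \sum_f ((w v *m (Hmat p)^T) 0 f) ^+ 2 / pFR1 p f ^+ 2.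
  by move=> v; apply: qf_rel.
have qBup : forall v, qf (Bmat p) v <= (pFl ^+ 2)^-1 * qf (Hmat p) (w v).
  move=> v; rewrite qB /qf nrmE mulr_sumr; apply: ler_sum => f _.
  rewrite mulrC ler_wpM2r ?sqr_ge0 //; apply: inv_sq_le => //.
  by have /andP [] := hpF f.
have qBlo : forall v, (pFh ^+ 2)^-1 * qf (Hmat p) (w v) <= qf (Bmat p) v.
  move=> v; rewrite qB /qf nrmE mulr_sumr; apply: ler_sum => f _.
  rewrite mulrC ler_wpM2l ?sqr_ge0 //; apply: inv_sq_le => //.
  by have /andP [] := hpF f.
have nw_up : forall v, nrm (w v) <= pih ^+ 2 * nrm v.
  move=> v; rewrite !nrmE mulr_sumr; apply: ler_sum => y _.
  rewrite mxE exprMn mulrC ler_wpM2r ?sqr_ge0 //; apply: sq_le; first exact: ltW.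
  by have /andP [] := hpi y.
have nw_lo : forall v, pil ^+ 2 * nrm v <= nrm (w v).
  move=> v; rewrite !nrmE mulr_sumr; apply: ler_sum => y _.
  rewrite mxE exprMn mulrC ler_wpM2l ?sqr_ge0 //; apply: sq_le; first exact: ltW.
  by have /andP [] := hpi y.
have lH0 : 0 <= lH.
  have [v nz hv] := eig_q eH.
  by rewrite -(pmulr_lge0 _ (nrm_gt0 nz)) -hv /qf nrm_ge0.
have mH0 : 0 < mH.
  have [v nz hv] := eig_q emH.
  rewrite -(pmulr_lgt0 _ (nrm_gt0 nz)) -hv lt_def /qf nrm_ge0 andbT.
  apply/eqP => /nrm_eq0 vH; case/negP: nz; apply/eqP/rowP => y; rewrite mxE.
  apply: injH => f; have /rowP /(_ f) := vH; rewrite !mxE => h0; rewrite -[RHS]h0.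
  by apply: eq_bigr => i _; rewrite !mxE mulrC.
have lBle : lB <= (pih / pFl) ^+ 2 * lH.
  have [v nz hv] := eig_q eB.
  rewrite -(ler_pM2r (nrm_gt0 nz)) -hv.
  apply: le_trans (qBup v) _.
  apply: (@le_trans _ _ ((pFl ^+ 2)^-1 * (lH * (pih ^+ 2 * nrm v)))).
    rewrite ler_wpM2l ?invr_ge0 ?sqr_ge0 //.
    by apply: le_trans (bH _) _; rewrite ler_wpM2l.
  rewrite le_eqVlt; apply/orP; left; apply/eqP; field.
  by rewrite gt_eqF.
have mBge : (pil / pFh) ^+ 2 * mH <= mB.
  have [v nz hv] := eig_q emB.
  rewrite -(ler_pM2r (nrm_gt0 nz)) -hv.
  apply: le_trans _ (qBlo v).
  apply: (@le_trans _ _ ((pFh ^+ 2)^-1 * (mH * (pil ^+ 2 * nrm v)))).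
    rewrite le_eqVlt; apply/orP; left; apply/eqP; field.
    by rewrite gt_eqF.
  rewrite ler_wpM2l ?invr_ge0 ?sqr_ge0 //.
  by apply: le_trans _ (bmH _); rewrite ler_wpM2l // ltW.
have sL : Num.sqrt lB <= pih / pFl * Num.sqrt lH.
  apply: le_trans (ler_wsqrtr lBle) _.
  rewrite sqrtrM ?sqr_ge0 // sqrtr_sqr ger0_norm //.
  by rewrite divr_ge0 // ltW // (lt_le_trans pil0) //; have /andP [h1 h2] := hpi (Ordinal M0); exact: le_trans h1 h2.
have sM : pil / pFh * Num.sqrt mH <= Num.sqrt mB.
  apply: le_trans (ler_wsqrtr mBge).
  by rewrite sqrtrM ?sqr_ge0 // sqrtr_sqr ger0_norm // divr_ge0 // ltW.
have sMH : 0 < Num.sqrt mH by rewrite sqrtr_gt0.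
have sMB : 0 < Num.sqrt mB.
  apply: lt_le_trans sM; rewrite mulr_gt0 // divr_gt0 //.
have pih0 : 0 < pih.
  have /andP [h1 h2] := hpi (Ordinal M0); exact: lt_le_trans pil0 (le_trans h1 h2).
rewrite ler_pdivrMr //; apply: le_trans sL _.
apply: (@le_trans _ _ (pFh / pFl * (pih / pil) * (Num.sqrt lH / Num.sqrt mH) * (pil / pFh * Num.sqrt mH))); last first.
  have C0 : 0 <= pFh / pFl * (pih / pil) * (Num.sqrt lH / Num.sqrt mH).
    by rewrite !mulr_ge0 ?invr_ge0 ?sqrtr_ge0 // ltW.
  by rewrite ler_wpM2l.
rewrite le_eqVlt; apply/orP; left; apply/eqP; field.
by rewrite !gt_eqF.
Qed.
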